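(* Let $n\ge 3$ and define $$m=\begin{cases} n-2, & n\equiv 1,3\pmod 6,\ n\ne 7;\\ n-1, & n=7 \text{ or } n\equiv 0,2,5\pmod 6,\ n\ne 6;\\ n, & n=6 \text{ or } n\equiv 4\pmod 6.\end{cases}$$ If $g\ge m$ is a positive integer and there exists an orthogonal array $\mathrm{OA}(3,n+2,g)$, then there exists a $\mathrm{TOC}_{g+1}(n,4,3)$.
   Context: $\mathcal{H}_q(n,w)$ is the set of all words of length $n$ over $\mathbb{Z}_q$ with exactly $w$ nonzero entries, with the Hamming distance. An $(n,d,w)_q$-code is a nonempty subset of $\mathcal{H}_q(n,w)$ in which any two distinct words have Hamming distance at least $d$; $A_q(n,d,w)$ is the maximum size of such a code and a code of this size is optimal. A $\mathrm{TOC}_q(n,d,w)$ is a partition of $\mathcal{H}_q(n,w)$ into mutually disjoint optimal $(n,d,w)_q$-codes. An orthogonal array $\mathrm{OA}(t,k,s)$ is an $s^t\times k$ array over an $s$-symbol alphabet such that in every choice of $t$ columns each ordered $t$-tuple of symbols appears in exactly one row. *)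

(* Defs.v *)
From mathcomp Require Import all_boot all_order.
Set Implicit Arguments. Unset Strict Implicit. Unset Printing Implicit Defensive.

Definition word (q n : nat) := {ffun 'I_n -> 'I_q}.

Definition hdist (q n : nat) (x y : word q n) : nat := #|[set i | x i != y i]|.

Definition hwt (q n : nat) (x : word q n) : nat := #|[set i | nat_of_ord (x i) != 0]|.

Definition Hset (q n w : nat) : {set word q n} := [set x | hwt x == w].

Definition is_code (q n d w : nat) (C : {set word q n}) : bool :=
  [&& C != set0, C \subset Hset q n w &
      [forall x in C, forall y in C, (x != y) ==> (d <= hdist x y)]].

Definition Aq (q n d w : nat) : nat :=
  \max_(C : {set word q n} | is_code d w C) #|C|.

Definition is_optimal_code (q n d w : nat) (C : {set word q n}) : bool :=
  is_code d w C && (#|C| == Aq q n d w).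

Definition is_TOC (q n d w : nat) (P : {set {set word q n}}) : Prop :=
  partition P (Hset q n w) /\ forall C, C \in P -> is_optimal_code d w C.

Definition is_OA (t k s : nat) (A : 'I_(s ^ t) -> 'I_k -> 'I_s) : Prop :=
  forall (c : 'I_t -> 'I_k), injective c ->
  forall (u : 'I_t -> 'I_s),
    #|[set r : 'I_(s ^ t) | [forall j, A r (c j) == u j]]| = 1.

Definition m_of (n : nat) : nat :=
  if n == 7 then n - 1
  else if n == 6 then n
  else match n %% 6 with
       | 1 | 3 => n - 2
       | 4 => n
       | _ => n - 1
       end.

(* Main.v *)
Require Import Defs.
From mathcomp Require Import all_boot all_order.
From mathcomp Require Import zify.
Set Implicit Arguments. Unset Strict Implicit. Unset Printing Implicit Defensive.

Definition c3 (T : Type) (a b d : T) (j : 'I_3) : T :=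
  match val j with 0 => a | 1 => b | _ => d end.

Lemma c3_inj (T : eqType) (a b d : T) : a != b -> a != d -> b != d -> injective (c3 a b d).
Proof.
move=> ab ad bd [[|[|[|x]]] Hx] [[|[|[|y]]] Hy] //= E; try (by apply: val_inj);
 rewrite /c3 /= in E; subst; by rewrite eqxx in ab ad bd.
Qed.

Lemma forall_c3 (k g : nat) (A : 'I_k -> 'I_g) (a b d : 'I_k) (x y z : 'I_g) :
  [forall j, A (c3 a b d j) == c3 x y z j] = [&& A a == x, A b == y & A d == z].
Proof.
apply/forallP/and3P => [H|[H1 H2 H3]].
  split; [exact: (H (@Ordinal 3 0 isT)) | exact: (H (@Ordinal 3 1 isT)) | exact: (H (@Ordinal 3 2 isT))].
by move=> [[|[|[|j]]] Hj].
Qed.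

Lemma oa_uniq k g (A : 'I_(g ^ 3) -> 'I_k -> 'I_g) : is_OA A ->
  forall c : 'I_3 -> 'I_k, injective c -> forall r r', (forall j, A r (c j) = A r' (c j)) -> r = r'.
Proof.
move=> hA c ic r r' E.
have /eqP/cards1P [x Hx] := hA c ic (fun j => A r (c j)).
have : r \in [set x] by rewrite -Hx inE; apply/forallP => j.
have : r' \in [set x] by rewrite -Hx inE; apply/forallP => j; rewrite E.
by rewrite !inE => /eqP -> /eqP ->.
Qed.

Lemma oa_ex k g (A : 'I_(g ^ 3) -> 'I_k -> 'I_g) : is_OA A ->
  forall c : 'I_3 -> 'I_k, injective c -> forall u, exists r, forall j, A r (c j) = u j.
Proof.
move=> hA c ic u.
have /eqP/cards1P [x Hx] := hA c ic u.
have : x \in [set x] by rewrite inE.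
by rewrite -Hx inE => /forallP H; exists x => j; apply/eqP.
Qed.

Lemma card_split (T K : finType) (S : {set T}) (f : T -> K) :
  #|S| = \sum_(k : K) #|[set x in S | f x == k]|.
Proof.
rewrite -sum1_card (partition_big f xpredT) //; apply: eq_bigr => k _.
rewrite -sum1_card; apply: eq_bigl => x; by rewrite inE.
Qed.

Lemma card_sum (T : finType) (S : {set T}) : #|S| = \sum_(x : T) (x \in S).
Proof. rewrite -sum1_card big_mkcond /=; apply: eq_bigr => i _; by case: (i \in S). Qed.

Lemma oa_bound k g (A : 'I_(g ^ 3) -> 'I_k -> 'I_g) : is_OA A -> 3 <= k -> 1 < g -> k <= g + 2.
Proof.
move=> hA hk hg.
have k0 : 0 < k by lia. have k1 : 1 < k by lia. have k2 : 2 < k by lia.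
have g0 : 0 < g by lia.
pose col0 := Ordinal k0. pose col1 := Ordinal k1. pose col2 := Ordinal k2.
have n01 : col0 != col1 by []. have n02 : col0 != col2 by []. have n12 : col1 != col2 by [].
have [r0 _] := oa_ex hA (c3_inj n01 n02 n12) (fun _ => Ordinal g0).
pose x0 := A r0 col0.
have cnt2 : forall j, j != col0 -> forall v, #|[set r | (A r col0 == x0) && (A r j == v)]| = g.
  move=> j hj v.
  pose j' := if val j == 1 then col2 else col1.
  have h0j' : col0 != j' by rewrite /j'; case: ifP.
  have hjj' : j != j'.
    rewrite /j'; case: ifP => [/eqP h|h]; apply/eqP => E; subst.
      by move: h; rewrite /=.
    by rewrite /= eqxx in h.
  rewrite (card_split _ (fun r => A r j')).
  rewrite (eq_bigr (fun _ => 1)); first by rewrite sum1_card card_ord.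
  move=> z _.
  have hj0 : col0 != j by rewrite eq_sym.
  apply: (etrans _ (hA _ (c3_inj hj0 h0j' hjj') (c3 x0 v z))).
  apply: eq_card => r; rewrite !inE forall_c3; by rewrite andbA.
pose S0 := [set r | A r col0 == x0].
have cS0 : #|S0| = g * g.
  rewrite (card_split _ (fun r => A r col1)).
  rewrite (eq_bigr (fun _ => g)); first by rewrite sum_nat_const card_ord.
  move=> v _; apply: (etrans _ (cnt2 col1 isT v)); apply: eq_card => r; by rewrite !inE.
have r0S : r0 \in S0 by rewrite inE.
pose E j := [set r | (A r col0 == x0) && (A r j == A r0 j)] :\ r0.
have cE : forall j, j \in [set~ col0] -> #|E j| = g - 1.
  move=> j; rewrite !inE => hj.
  have := cardsD1 r0 [set r | (A r col0 == x0) && (A r j == A r0 j)].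
  rewrite cnt2 // inE !eqxx /= => h; rewrite /E; move: h; set X := #|_ :\ r0|; lia.
have key : \sum_(j in [set~ col0]) #|E j| <= #|S0 :\ r0|.
  under eq_bigr => j _ do rewrite card_sum.
  rewrite exchange_big /= [X in _ <= X]card_sum.
  apply: leq_sum => r _.
  case: (pickP (fun j => (j \in [set~ col0]) && (r \in E j))) => [j1 /andP [hj1 hr1]|none].
    rewrite (bigD1 j1) //= hr1 big1 /=.
      move: hr1; rewrite !inE => /andP [-> /andP [-> _]]; by [].
    move=> j2 /andP [hj2 h12]; case: (boolP (r \in E j2)) => // hr2; exfalso.
    move: hr1 hr2 hj1 hj2; rewrite !inE => /andP [rr0 /andP [a1 b1]] /andP [_ /andP [_ b2]] hj1 hj2.
    move/negP: rr0; apply; apply/eqP.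
    have h01 : col0 != j1 by rewrite eq_sym.
    have h02 : col0 != j2 by rewrite eq_sym.
    have h12' : j1 != j2 by rewrite eq_sym.
    apply: (oa_uniq hA (c3_inj h01 h02 h12')) => -[[|[|[|j]]] Hj] //=; rewrite /c3 /=; apply/eqP => //.
  rewrite big1 // => j hj; by move: (none j); rewrite hj /= => ->.
have hs : \sum_(j in [set~ col0]) #|E j| = #|[set~ col0]| * (g - 1).
  by rewrite -sum_nat_const; apply: eq_bigr.
rewrite hs cardsC1 card_ord in key.
have := cardsD1 r0 S0; rewrite r0S cS0 => hS.
move: key; set X := #|S0 :\ r0| => key.
nia.
Qed.

Definition sT n (T : {set 'I_n}) : nat := \sum_(i in T) (i : nat).
Definition wcol n (i : 'I_n) : 'I_(n + 2) := widen_ord (leq_addr 2 n) i.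
Definition mkw n g (A : 'I_(g ^ 3) -> 'I_(n + 2) -> 'I_g) (r : 'I_(g ^ 3)) (T : {set 'I_n}) : word g.+1 n :=
  [ffun i => if i \in T then inord ((A r (wcol i) + sT T) %% g).+1 else ord0].
Definition triples n : {set {set 'I_n}} := [set T : {set 'I_n} | #|T| == 3].
Definition code n g (A : 'I_(g ^ 3) -> 'I_(n + 2) -> 'I_g) r : {set word g.+1 n} :=
  [set mkw A r T | T in triples n].
Definition supp q n (x : word q n) : {set 'I_n} := [set i | nat_of_ord (x i) != 0].

Lemma wcol_inj n : injective (@wcol n).
Proof. by move=> i j /(congr1 val) /= /val_inj. Qed.

Lemma mkw_in n g A r (T : {set 'I_n}) (i : 'I_n) : 0 < g -> i \in T ->
  (@mkw n g A r T i : nat) = ((A r (wcol i) + sT T) %% g).+1.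
Proof. move=> g0 iT; rewrite ffunE iT inordK // ltnS; exact: ltn_pmod. Qed.

Lemma mkw_out n g A r (T : {set 'I_n}) (i : 'I_n) : i \notin T -> (@mkw n g A r T i : nat) = 0.
Proof. by move=> iT; rewrite ffunE (negbTE iT). Qed.

Lemma supp_mkw n g A r (T : {set 'I_n}) : 0 < g -> supp (@mkw n g A r T) = T.
Proof.
move=> g0; apply/setP => i; rewrite inE.
case: (boolP (i \in T)) => iT; first by rewrite mkw_in.
by rewrite mkw_out.
Qed.

Lemma enum3 n (T : {set 'I_n}) : #|T| = 3 -> exists c : 'I_3 -> 'I_n,
  [/\ injective c, forall j, c j \in T & forall i, i \in T -> exists j, c j = i].
Proof.
move=> H.
exists (fun j => @enum_val _ (mem T) (cast_ord (esym H) j)); split.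
- by move=> j j' /enum_val_inj /cast_ord_inj.
- move=> j; exact: enum_valP.
- move=> i iT; exists (cast_ord H (enum_rank_in iT i)).
  by rewrite cast_ordK enum_rankK_in.
Qed.

Lemma mkw_inj n g (A : 'I_(g ^ 3) -> 'I_(n + 2) -> 'I_g) r r' (T T' : {set 'I_n}) :
  is_OA A -> 0 < g -> #|T| = 3 -> mkw A r T = mkw A r' T' -> r = r' /\ T = T'.
Proof.
move=> hA g0 H3 E.
have TT : T = T' by rewrite -(supp_mkw A r T g0) E supp_mkw.
subst T'; split=> //.
have [c [ic cT _]] := enum3 H3.
apply: (oa_uniq hA (c := fun j => wcol (c j))) => [j j' /wcol_inj /ic //|j].
have := congr1 (fun x : word _ _ => (x (c j) : nat)) E => /=.
rewrite !mkw_in // => -[] /eqP.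
rewrite eqn_modDr !modn_small // => /eqP h; exact: val_inj.
Qed.

Lemma sT_split n (T T' : {set 'I_n}) c : T :\: T' = [set c] ->
  sT T = \sum_(i in T :&: T') (i : nat) + c.
Proof. by rewrite /sT (big_setID T') => ->; rewrite big_set1. Qed.

Lemma mkw_dist n g (A : 'I_(g ^ 3) -> 'I_(n + 2) -> 'I_g) r (T T' : {set 'I_n}) :
  0 < g -> (n <= g \/ n = 3) -> #|T| = 3 -> #|T'| = 3 -> T != T' ->
  4 <= hdist (mkw A r T) (mkw A r T').
Proof.
move=> g0 hng H3 H3' neq.
have hng' : n <= g.
  case: hng => // n3; exfalso.
  have eT : forall U : {set 'I_n}, #|U| = 3 -> U = setT.
    move=> U hU; apply/eqP; rewrite eqEcard subsetT cardsT card_ord hU n3 //.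
  by rewrite (eT T H3) (eT T' H3') eqxx in neq.
set x := mkw A r T; set y := mkw A r T'.
set I := T :&: T'.
have hI : #|I| <= 2.
  rewrite leqNgt; apply/negP => h3.
  have h : #|I| <= 3 by rewrite -H3; apply: subset_leq_card; apply: subsetIl.
  have e1 : I == T by rewrite eqEcard subsetIl H3; lia.
  have e2 : I == T' by rewrite eqEcard subsetIr H3'; lia.
  by move/eqP: e1 => e1; move/eqP: e2 => e2; rewrite -e1 e2 eqxx in neq.
have sub1 : (T :|: T') :\: I \subset [set i | x i != y i].
  apply/subsetP => i; rewrite !inE => /andP [hnI hU].
  apply/negP => /eqP /(congr1 val) /=.
  case/orP: hU => hi.
    have hi' : i \notin T' by move: hnI; rewrite hi ?andbT ?andTb.
    by rewrite /x /y mkw_in // mkw_out.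
  have hi' : i \notin T by move: hnI; rewrite hi ?andbT ?andTb.
  by rewrite /x /y mkw_out // mkw_in.
have IU : I \subset T :|: T' by apply: subset_trans (subsetIl _ _) (subsetUl _ _).
have cU : #|T :|: T'| = 6 - #|I| by rewrite cardsU H3 H3'.
rewrite /hdist.
case: (ltnP #|I| 2) => hI2.
  apply: leq_trans (subset_leq_card sub1).
  rewrite cardsD (setIidPr IU) cU; lia.
have I2 : #|I| = 2 by lia.
have sub2 : T :|: T' \subset [set i | x i != y i].
  apply/subsetP => i hi.
  case: (boolP (i \in I)) => iI; last by apply: (subsetP sub1); rewrite inE iI hi.
  rewrite inE; apply/negP => /eqP /(congr1 val) /=.
  move: (iI); rewrite inE => /andP [iT iT'].
  rewrite /x /y !mkw_in // => -[] /eqP.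
  rewrite eqn_modDl.
  have /cards1P [c hc] : #|T :\: T'| == 1 by rewrite cardsD H3 -/I I2.
  have /cards1P [c' hc'] : #|T' :\: T| == 1 by rewrite cardsD H3' setIC -/I I2.
  rewrite (sT_split hc) (sT_split hc') setIC -/I eqn_modDl !modn_small //;
    try (apply: leq_trans (ltn_ord _) hng').
  move=> /eqP /val_inj ecc; subst c'.
  have : c \in T :\: T' by rewrite hc inE.
  have : c \in T' :\: T by rewrite hc' inE.
  by rewrite !inE => /andP [_ h1] /andP [h2 _]; rewrite h1 in h2.
apply: leq_trans (subset_leq_card sub2); rewrite cU; lia.
Qed.

Lemma code_le q n (C : {set word q n}) : is_code 4 3 C -> #|C| <= #|triples n|.
Proof.
case/and3P => _ /subsetP CH hd.
have inj : {in C &, injective (@supp q n)}.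
  move=> x y xC yC es; apply/eqP; apply/negPn/negP => nxy.
  move/forall_inP: hd => /(_ x xC) /forall_inP /(_ y yC); rewrite nxy /= => h4.
  have : #|[set i | x i != y i]| <= #|supp x|.
    apply: subset_leq_card; apply/subsetP => i; rewrite !inE => hi.
    apply/negP => /eqP hx0; move: hi; apply/negP; rewrite negbK; apply/eqP/val_inj => /=.
    have : i \notin supp y by rewrite -es inE hx0 eqxx.
    by rewrite inE negbK hx0 => /eqP ->.
  have := CH x xC; rewrite inE => /eqP hw.
  have e : hwt x = #|supp x| by [].
  move=> hle; have h4p : 3 < #|[set i | x i != y i]| := h4; lia.
rewrite -(card_in_imset inj); apply: subset_leq_card; apply/subsetP => _ /imsetP [x xC ->].
by rewrite inE; have := CH x xC; rewrite inE.
Qed.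

Lemma m_of_ge n : n - 2 <= m_of n.
Proof.
rewrite /m_of; case: ifP => _; first lia; case: ifP => _; first lia.
case: (n %% 6) => [|[|[|[|[|?]]]]]; lia.
Qed.

Theorem theorem4p8 (n g : nat) :
  3 <= n -> 0 < g -> m_of n <= g ->
  (exists A : 'I_(g ^ 3) -> 'I_(n + 2) -> 'I_g, is_OA A) ->
  exists P : {set {set word (g + 1) n}}, is_TOC 4 3 P.
Proof.
move=> hn hg hm [A hA].
have hng : n <= g \/ n = 3.
  case: (ltnP 1 g) => g1.
    left; have := oa_bound hA (leq_trans hn (leq_addr 2 n)) g1; lia.
  right; have := m_of_ge n; lia.
rewrite addn1.
have tr0 : triples n != set0 by rewrite -card_gt0 /triples card_draws card_ord bin_gt0.
have code_ok : forall r, is_code 4 3 (code A r) /\ #|code A r| = #|triples n|.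
  move=> r.
  have cc : #|code A r| = #|triples n|.
    apply: card_in_imset => T T' hT hT' E.
    move: hT; rewrite inE => /eqP hT; by case: (mkw_inj hA hg hT E).
  split=> //; apply/and3P; split.
  - by rewrite -card_gt0 cc card_gt0.
  - apply/subsetP => _ /imsetP [T hT ->]; rewrite inE; apply/eqP.
    have -> : hwt (mkw A r T) = #|supp (mkw A r T)| by [].
    by rewrite supp_mkw //; move: hT; rewrite inE => /eqP.
  - apply/forall_inP => _ /imsetP [T hT ->]; apply/forall_inP => _ /imsetP [T' hT' ->].
    apply/implyP => ne.
    move: hT hT'; rewrite !inE => /eqP hT /eqP hT'.
    apply: mkw_dist => //.
    by apply/negP => /eqP E; rewrite E eqxx in ne.
have r0g : 0 < g ^ 3 by rewrite expn_gt0 hg.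
pose r0 : 'I_(g ^ 3) := Ordinal r0g.
have Aeq : Aq g.+1 n 4 3 = #|triples n|.
  apply/eqP; rewrite eqn_leq; apply/andP; split.
    apply/bigmax_leqP => C hC; exact: code_le.
  rewrite -(code_ok r0).2; exact: (leq_bigmax_cond _ (code_ok r0).1).
exists [set code A r | r : 'I_(g ^ 3)].
split; last first.
  move=> C /imsetP [r _ ->].
  by rewrite /is_optimal_code (code_ok r).1 /= (code_ok r).2 Aeq eqxx.
apply/and3P; split.
- apply/eqP/setP => x; apply/bigcupP/idP.
  + move=> [C /imsetP [r _ ->]] /imsetP [T hT ->]; rewrite inE; apply/eqP.
    have -> : hwt (mkw A r T) = #|supp (mkw A r T)| by [].
    by rewrite supp_mkw //; move: hT; rewrite inE => /eqP.
  + rewrite inE => /eqP hx.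
    set T := supp x.
    have hT : #|T| = 3 by [].
    have [c [ic cT cov]] := enum3 hT.
    pose s := sT T.
    have lt : forall j, (x (c j) - 1 + (g - s %% g)) %% g < g by move=> j; exact: ltn_pmod.
    have icw : injective (fun j => wcol (c j)) by move=> j j' /wcol_inj /ic.
    have [r hr] := oa_ex hA icw (fun j => Ordinal (lt j)).
    exists (code A r); first by apply/imsetP; exists r.
    apply/imsetP; exists T; first by rewrite inE hT.
    apply/ffunP => i; apply/val_inj => /=.
    case: (boolP (i \in T)) => iT.
      rewrite mkw_in //.
      have [j ej] := cov i iT; subst i.
      rewrite hr /= modnDml -/s.
      have xpos : 0 < x (c j) by move: (cT j); rewrite inE lt0n.
      have xlt : x (c j) < g.+1 := ltn_ord _.
      have sm : s %% g < g := ltn_pmod _ hg.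
      have sd := divn_eq s g.
      have -> : x (c j) - 1 + (g - s %% g) + s = (s %/ g).+1 * g + (x (c j) - 1) by lia.
      rewrite modnMDl modn_small; first by rewrite subn1 prednK.
      by rewrite subn1 -ltnS prednK.
    rewrite mkw_out //.
    by move: iT; rewrite inE negbK => /eqP.
- apply/trivIsetP => _ _ /imsetP [r _ ->] /imsetP [r' _ ->] neq.
  rewrite -setI_eq0; apply/negPn/negP => /set0Pn [w].
  rewrite inE => /andP [/imsetP [T hT ->] /imsetP [T' hT' E]].
  move: hT; rewrite inE => /eqP hT.
  have [er _] := mkw_inj hA hg hT E.
  by rewrite er eqxx in neq.
- apply/imsetP => -[r _ E].
  by have /and3P [ne _ _] := (code_ok r).1; rewrite -E eqxx in ne.
Qed.
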